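(* Let $R$ be an ideal QRF with a faithful, possibly projective, unitary representation $U_R(G)=\mathcal{G}_R$ of $G=\mathbb{Z}_2^{\times(n-k)}$ on $\mathcal{H}_R\simeq(\mathbb{C}^2)^{\otimes(n-k)}$ such that $-I_R\notin\mathcal{G}_R$. For each covariant orthonormal orientation basis $\{\ket g_R\}_{g\in G}$ of $\mathcal{H}_R$, the map $\hat U_R:\hat G\to\mathrm{Aut}(\mathcal{H}_R)$, $\hat U^\chi_R=\sum_{g\in G}\chi(g)\ket g\!\bra g_R$, is a unitary representation of $\hat G$ that is dual to $\mathcal{G}_R$: $U^g_R\hat U^\chi_R=\chi(g)\hat U^\chi_RU^g_R$ for all $g\in G$, $\chi\in\hat G$. Conversely, each unitary representation $\hat U_R$ of $\hat G$ on $\mathcal{H}_R$ dual to $\mathcal{G}_R$ gives rise to a covariant orthonormal orientation basis of $\mathcal{H}_R$. Furthermore, the elements of any such $\hat{\mathcal{G}}_R=\hat U_R(\hat G)$ square to the identity and satisfy $\mathrm{Tr}(\hat U^\chi_R\hat U^\eta_R)=2^{n-k}\delta_{\chi,\eta}$ for all $\chi,\eta\in\hat G$.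
   Context: $G=\mathbb{Z}_2^{\times(n-k)}$ (neutral element $e$) and $\hat G$ is its group of characters $\chi:G\to\{\pm1\}$ (pointwise product). A possibly projective unitary representation satisfies $U^g_RU^h_R=c(g,h)U^{gh}_R$ with phases $|c(g,h)|=1$, $U^e_R=I_R$, $c(g,e)=c(e,g)=1$, the cocycle condition $c(g,hk)c(h,k)=c(g,h)c(gh,k)$, and (by a choice of phases assumed throughout) $c(g,g^{-1})=1$ for all $g$. A covariant orthonormal orientation basis is an orthonormal basis $\{\ket g_R\}_{g\in G}$ of $\mathcal{H}_R$ with $U^g_R\ket h_R=c(g,h)\ket{gh}_R$ for all $g,h$; a QRF admitting one is called ideal. A unitary representation $\hat U_R$ of $\hat G$ on $\mathcal{H}_R$ is dual to $\mathcal{G}_R$ if $U^g_R\hat U^\chi_R=\chi(g)\hat U^\chi_RU^g_R$ for all $g,\chi$. *)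

(* Defs.v *)
From HB Require Import structures.
From mathcomp Require Import all_boot all_order all_algebra.
Set Implicit Arguments. Unset Strict Implicit. Unset Printing Implicit Defensive.
Import Order.TTheory GRing.Theory Num.Theory.
Local Open Scope ring_scope.

(* The group G = Z_2^m (m = n - k), written additively: neutral element 0,
   group law +, inverse g^{-1} = -g (= g). *)
Definition Zgrp (m : nat) : finType := 'rV['F_2]_m.

Definition adjmx (C : numClosedFieldType) (p q : nat) (A : 'M[C]_(p, q)) : 'M[C]_(q, p) :=
  (map_mx Num.conj A)^T.

Definition unitary (C : numClosedFieldType) (d : nat) (A : 'M[C]_d) : Prop :=
  A *m adjmx A = 1%:M /\ adjmx A *m A = 1%:M.

(* Possibly projective unitary representation of G with cocycle c,
   including the phase conventions fixed in the paper. *)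
Definition proj_unitary_rep (C : numClosedFieldType) (m : nat)
    (U : Zgrp m -> 'M[C]_(2 ^ m)) (c : Zgrp m -> Zgrp m -> C) : Prop :=
  (forall g, unitary (U g)) /\
  (forall g h, U g *m U h = c g h *: U (g + h)) /\
  (forall g h, `|c g h| = 1) /\
  U 0 = 1%:M /\
  (forall g, c g 0 = 1 /\ c 0 g = 1) /\
  (forall g h k, c g (h + k) * c h k = c g h * c (g + h) k) /\
  (forall g, c g (- g) = 1).

Definition is_character (C : numClosedFieldType) (m : nat) (chi : {ffun Zgrp m -> C}) : Prop :=
  (forall g h, chi (g + h) = chi g * chi h) /\ (forall g, chi g = 1 \/ chi g = -1).

Definition char_mul (C : numClosedFieldType) (m : nat) (chi eta : {ffun Zgrp m -> C})
  : {ffun Zgrp m -> C} := [ffun g => chi g * eta g].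

(* A unitary representation of \hat G on H_R (only its values on characters matter). *)
Definition hat_unitary_rep (C : numClosedFieldType) (m : nat)
    (Uh : {ffun Zgrp m -> C} -> 'M[C]_(2 ^ m)) : Prop :=
  (forall chi, is_character chi -> unitary (Uh chi)) /\
  (forall chi eta, is_character chi -> is_character eta ->
     Uh (char_mul chi eta) = Uh chi *m Uh eta).

Definition dual_to (C : numClosedFieldType) (m : nat)
    (U : Zgrp m -> 'M[C]_(2 ^ m)) (Uh : {ffun Zgrp m -> C} -> 'M[C]_(2 ^ m)) : Prop :=
  forall g chi, is_character chi -> U g *m Uh chi = chi g *: (Uh chi *m U g).

(* Covariant orthonormal orientation basis {|g>}_{g in G} (|G| = 2^m = dim H_R,
   so an orthonormal family indexed by G is a basis). *)
Definition covariant_onb (C : numClosedFieldType) (m : nat)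
    (U : Zgrp m -> 'M[C]_(2 ^ m)) (c : Zgrp m -> Zgrp m -> C)
    (b : Zgrp m -> 'cV[C]_(2 ^ m)) : Prop :=
  (forall g h, adjmx (b g) *m b h = (g == h)%:R%:M) /\
  (forall g h, U g *m b h = c g h *: b (g + h)).

Definition hat_from_basis (C : numClosedFieldType) (m : nat)
    (b : Zgrp m -> 'cV[C]_(2 ^ m)) (chi : {ffun Zgrp m -> C}) : 'M[C]_(2 ^ m) :=
  \sum_(g : Zgrp m) chi g *: (b g *m adjmx (b g)).

(* Main.v *)
Require Import Defs.
From HB Require Import structures.
From mathcomp Require Import all_boot all_order all_algebra.
From mathcomp Require Import ring.
Import Order.TTheory GRing.Theory Num.Theory.
Set Implicit Arguments. Unset Strict Implicit.
Local Open Scope ring_scope.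

Section Adj.
Variable C : numClosedFieldType.

Lemma adjmxM p q r (A : 'M[C]_(p, q)) (B : 'M[C]_(q, r)) :
  adjmx (A *m B) = adjmx B *m adjmx A.
Proof. by rewrite /adjmx map_mxM trmx_mul. Qed.

Lemma adjmxD p q (A B : 'M[C]_(p, q)) : adjmx (A + B) = adjmx A + adjmx B.
Proof. by rewrite /adjmx map_mxD linearD. Qed.

Lemma adjmxZ p q a (A : 'M[C]_(p, q)) : adjmx (a *: A) = a^* *: adjmx A.
Proof. by rewrite /adjmx map_mxZ linearZ. Qed.

Lemma adjmxN p q (A : 'M[C]_(p, q)) : adjmx (- A) = - adjmx A.
Proof. by rewrite /adjmx map_mxN linearN. Qed.

Lemma adjmxK p q (A : 'M[C]_(p, q)) : adjmx (adjmx A) = A.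
Proof. by apply/matrixP=> i j; rewrite /adjmx !mxE conjCK. Qed.

Lemma adjmx1 n : adjmx (1%:M : 'M[C]_n) = 1%:M.
Proof. by rewrite /adjmx map_scalar_mx /= conjC1 tr_scalar_mx. Qed.

Lemma adjmx_sum p q (I : finType) (F : I -> 'M[C]_(p, q)) :
  adjmx (\sum_i F i) = \sum_i adjmx (F i).
Proof. by rewrite /adjmx map_mx_sum linear_sum. Qed.

Lemma adjmx_entry p q (A : 'M[C]_(p, q)) i j : adjmx A i j = (A j i)^*.
Proof. by rewrite /adjmx !mxE. Qed.
End Adj.


Lemma card_G m : #|Zgrp m| = (2 ^ m)%N.
Proof. by rewrite /Zgrp card_mx card_Fp // mul1n. Qed.

Section Compl.
Variable C : numClosedFieldType.
Variable m : nat.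

Definition ord2G (j : 'I_(2 ^ m)) : Zgrp m := enum_val (cast_ord (esym (card_G m)) j).
Definition G2ord (g : Zgrp m) : 'I_(2 ^ m) := cast_ord (card_G m) (enum_rank g).

Lemma ord2GK : cancel ord2G G2ord.
Proof. by move=> j; rewrite /ord2G /G2ord enum_valK cast_ordKV. Qed.
Lemma G2ordK : cancel G2ord ord2G.
Proof. by move=> g; rewrite /ord2G /G2ord cast_ordK enum_rankK. Qed.

Lemma complete (b : Zgrp m -> 'cV[C]_(2 ^ m)) :
  (forall g h, adjmx (b g) *m b h = (g == h)%:R%:M) ->
  \sum_g b g *m adjmx (b g) = 1%:M.
Proof.
move=> orth.
pose B : 'M[C]_(2 ^ m) := \matrix_(i, j) b (ord2G j) i 0.
have H1 : adjmx B *m B = 1%:M.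
  apply/matrixP=> j k; rewrite !mxE.
  have := congr1 (fun M : 'M_1 => M 0 0) (orth (ord2G j) (ord2G k)).
  rewrite /= !mxE /= (can_eq ord2GK) mulr1n => <-.
  by apply: eq_bigr => i _; rewrite !mxE.
have H2 := mulmx1C H1.
rewrite -H2; apply/matrixP=> i k; rewrite summxE !mxE.
rewrite (reindex ord2G) /=; last by exists G2ord => x _; [apply: ord2GK | apply: G2ordK].
by apply: eq_bigr => j _; rewrite !mxE big_ord1 !mxE.
Qed.
End Compl.


Section Proj.
Variable C : numClosedFieldType.
Variable m : nat.
Variable b : Zgrp m -> 'cV[C]_(2 ^ m).
Hypothesis orth : forall g h, adjmx (b g) *m b h = (g == h)%:R%:M.

Lemma bP g h (M : 'M[C]_(1, 2 ^ m)) : b g *m (adjmx (b g) *m b h) *m M = (g == h)%:R *: (b g *m M).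
Proof. by rewrite orth mul_mx_scalar -scalemxAl. Qed.

Lemma projsum_mul (al be : Zgrp m -> C) :
  (\sum_g al g *: (b g *m adjmx (b g))) *m (\sum_h be h *: (b h *m adjmx (b h)))
  = \sum_g (al g * be g) *: (b g *m adjmx (b g)).
Proof.
rewrite mulmx_suml; apply: eq_bigr => g _.
rewrite mulmx_sumr (bigD1 g) //= big1 ?addr0.
  by rewrite -scalemxAl -scalemxAr scalerA mulmxA -(mulmxA (b g)) bP eqxx scale1r.
move=> h hg; rewrite eq_sym in hg; rewrite -scalemxAl -scalemxAr mulmxA -(mulmxA (b g)) bP (negbTE hg).
by rewrite scale0r !scaler0.
Qed.

Lemma projsum_vec (al : Zgrp m -> C) h :
  (\sum_g al g *: (b g *m adjmx (b g))) *m b h = al h *: b h.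
Proof.
rewrite mulmx_suml (bigD1 h) //= big1 ?addr0.
  by rewrite -scalemxAl -mulmxA orth eqxx mul_mx_scalar scale1r.
move=> g gh; by rewrite -scalemxAl -mulmxA orth (negbTE gh) mul_mx_scalar !scale0r scaler0.
Qed.
End Proj.

Section Chars.
Variable C : numClosedFieldType.
Variable m : nat.
Implicit Types chi eta : {ffun Zgrp m -> C}.

Lemma F2_addK (x : 'F_2) : x + x = 0.
Proof. by case: x => [[|[|//]]] ?; apply/val_inj. Qed.

Lemma G_addK (g : Zgrp m) : g + g = 0.
Proof. by apply/matrixP=> i j; rewrite !mxE F2_addK. Qed.

Lemma neg1_neq1 : (-1 : C) != 1.
Proof.
apply/eqP=> h; have : (2%:R : C) == 0 by rewrite mulr2n -{1}h addNr.
by rewrite pnatr_eq0.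
Qed.

Lemma char0 chi : is_character chi -> chi 0 = 1.
Proof.
case=> hm hpm; case: (hpm 0) => // h0; have := hm 0 0; rewrite addr0 h0 mulrNN mulr1 => /eqP.
by rewrite (negbTE neg1_neq1).
Qed.

Lemma charsq chi g : is_character chi -> chi g * chi g = 1.
Proof. by case=> _ /(_ g) [] ->; rewrite ?mulr1 ?mulrNN ?mulr1. Qed.

Lemma charconj chi g : is_character chi -> (chi g)^* = chi g.
Proof. by case=> _ /(_ g) [] ->; rewrite ?rmorphN ?rmorph1 ?conjC1. Qed.

Definition triv : {ffun Zgrp m -> C} := [ffun=> 1].

Lemma triv_char : is_character triv.
Proof. split=> [g h|g]; rewrite !ffunE ?mulr1 //; by left. Qed.

Lemma mul_char chi eta : is_character chi -> is_character eta -> is_character (char_mul chi eta).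
Proof.
move=> [h1 p1] [h2 p2]; split=> [g h|g]; rewrite !ffunE.
  by rewrite h1 h2 mulrACA.
by case: (p1 g) => ->; case: (p2 g) => ->; rewrite ?mulrNN ?mulr1 ?mul1r; [left|right|right|left].
Qed.

Lemma mul_char_sq chi : is_character chi -> char_mul chi chi = triv.
Proof. by move=> hc; apply/ffunP=> g; rewrite !ffunE charsq. Qed.

Lemma mul_char_triv chi : char_mul chi triv = chi.
Proof. by apply/ffunP=> g; rewrite !ffunE mulr1. Qed.

Lemma char_neq chi eta : is_character chi -> is_character eta -> chi != eta ->
  exists g, char_mul chi eta g = -1.
Proof.
move=> [_ p1] [_ p2] /eqP ne.
have /existsP [g hg] : [exists g, chi g != eta g].
  case: existsP => // H; exfalso; apply: ne; apply/ffunP => g; apply/eqP.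
  by apply/negPn/negP => hg; apply: H; exists g.
exists g; rewrite ffunE; move: hg.
by case: (p1 g) => ->; case: (p2 g) => ->; rewrite ?eqxx // ?mulr1 ?mul1r.
Qed.
End Chars.


Section Part3.
Variable C : numClosedFieldType.
Variable m : nat.
Variable U : Zgrp m -> 'M[C]_(2 ^ m).
Variable Uh : {ffun Zgrp m -> C} -> 'M[C]_(2 ^ m).
Hypothesis pU : forall g, unitary (U g).
Hypothesis hUh : hat_unitary_rep Uh.
Hypothesis hd : dual_to U Uh.

Lemma Uh_triv : Uh (triv C m) = 1%:M.
Proof.
case: hUh => un mul.
have e := mul _ _ (triv_char C m) (triv_char C m); rewrite mul_char_triv in e.
case: (un _ (triv_char C m)) => h1 _.
by rewrite -h1 {2}e -mulmxA h1 mulmx1.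
Qed.

Lemma Uh_sq chi : is_character chi -> Uh chi *m Uh chi = 1%:M.
Proof. by move=> hc; case: hUh => _ mul; rewrite -mul // mul_char_sq // Uh_triv. Qed.

Lemma Uh_herm chi : is_character chi -> adjmx (Uh chi) = Uh chi.
Proof.
move=> hc; case: hUh => un _; case: (un _ hc) => h1 _.
by rewrite -[adjmx _]mul1mx -(Uh_sq hc) -mulmxA h1 mulmx1.
Qed.

Lemma tr_nontriv psi g : is_character psi -> psi g = -1 -> \tr (Uh psi) = 0.
Proof.
move=> hc hg; case: (pU g) => u1 u2.
have e := hd g hc; rewrite hg scaleN1r in e.
have : \tr (Uh psi) = - \tr (Uh psi).
  rewrite -{1}[Uh psi]mulmx1 -u1 mulmxA -[Uh psi *m U g]opprK -e.
  by rewrite mulNmx raddfN /= -mulmxA mxtrace_mulC -mulmxA u2 mulmx1.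
move/eqP; rewrite -subr_eq0 opprK -mulr2n mulrn_eq0 /=.
by move/eqP.
Qed.


Lemma part3_tr chi eta : is_character chi -> is_character eta ->
  \tr (Uh chi *m Uh eta) = (2 ^ m)%:R * (chi == eta)%:R.
Proof.
move=> hc he; case: hUh => _ mul; rewrite -mul //.
case: eqP => [<-|/eqP ne].
  by rewrite mul_char_sq // Uh_triv mxtrace1 mulr1.
have [g hg] := char_neq hc he ne.
by rewrite (tr_nontriv (mul_char hc he) hg) mulr0.
Qed.
End Part3.


Section Part1.
Variable C : numClosedFieldType.
Variable m : nat.
Variable U : Zgrp m -> 'M[C]_(2 ^ m).
Variable c : Zgrp m -> Zgrp m -> C.
Variable b : Zgrp m -> 'cV[C]_(2 ^ m).
Hypothesis hb : covariant_onb U c b.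

Lemma hat_adj chi : is_character chi -> adjmx (hat_from_basis b chi) = hat_from_basis b chi.
Proof.
move=> hc; rewrite /hat_from_basis adjmx_sum; apply: eq_bigr => g _.
by rewrite adjmxZ adjmxM adjmxK charconj.
Qed.

Lemma hat_mul chi eta : hat_from_basis b (char_mul chi eta) = hat_from_basis b chi *m hat_from_basis b eta.
Proof.
case: hb => orth _; rewrite /hat_from_basis projsum_mul //.
by apply: eq_bigr => g _; rewrite ffunE.
Qed.

Lemma hat_sq chi : is_character chi -> hat_from_basis b chi *m hat_from_basis b chi = 1%:M.
Proof.
move=> hc; case: hb => orth _; rewrite -hat_mul mul_char_sq // -(@complete _ _ _ orth).
by apply: eq_bigr => g _; rewrite ffunE scale1r.
Qed.

Lemma part1a : hat_unitary_rep (hat_from_basis b).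
Proof.
split=> [chi hc|chi eta hc he]; last exact: hat_mul.
by rewrite /unitary hat_adj // hat_sq.
Qed.

Lemma part1b : dual_to U (hat_from_basis b).
Proof.
case: hb => orth cov; move=> g chi hc.
have eU : U g = \sum_k c g k *: (b (g + k) *m adjmx (b k)).
  rewrite -[U g]mulmx1 -(@complete _ _ _ orth) mulmx_sumr; apply: eq_bigr => k _.
  by rewrite mulmxA cov scalemxAl.
have eL : U g *m hat_from_basis b chi = \sum_h (chi h * c g h) *: (b (g + h) *m adjmx (b h)).
  rewrite /hat_from_basis mulmx_sumr; apply: eq_bigr => h _.
  by rewrite -scalemxAr mulmxA cov -scalemxAl scalerA.
have eR : hat_from_basis b chi *m U g = \sum_k (c g k * chi (g + k)) *: (b (g + k) *m adjmx (b k)).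
  rewrite {1}eU mulmx_sumr; apply: eq_bigr => k _.
  by rewrite -scalemxAr mulmxA projsum_vec // -scalemxAl scalerA.
rewrite eL eR scaler_sumr; apply: eq_bigr => k _; rewrite scalerA; congr (_ *: _).
have hq := charsq g hc; case: hc => hm _; rewrite hm.
transitivity (chi g * chi g * (chi k * c g k)); first by rewrite hq mul1r.
ring.
Qed.
End Part1.


Section Chr.
Variable C : numClosedFieldType.
Variable m : nat.

Definition sgnF (x : 'F_2) : C := if x == 0 then 1 else -1.

Lemma F2_cases (x : 'F_2) : x = 0 \/ x = 1.
Proof. by case: x => [[|[|//]]] ?; [left|right]; apply/val_inj. Qed.

Lemma sgnF_add x y : sgnF (x + y) = sgnF x * sgnF y.
Proof.
by case: (F2_cases x) => ->; case: (F2_cases y) => ->; rewrite /sgnF /= ?mulr1 ?mul1r ?mulrNN ?mulr1.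
Qed.

Lemma sgnF_inj x y : sgnF x = sgnF y -> x = y.
Proof.
case: (F2_cases x) => ->; case: (F2_cases y) => -> //= /eqP; rewrite /sgnF /=.
  by rewrite eq_sym (negbTE (neg1_neq1 C)).
by rewrite (negbTE (neg1_neq1 C)).
Qed.

Lemma add00 (A B : 'M['F_2]_1) : (A + B) 0 0 = A 0 0 + B 0 0.
Proof. by rewrite mxE. Qed.

Definition dotF (a g : Zgrp m) : 'F_2 := ((a : 'rV['F_2]_m) *m (g : 'rV['F_2]_m)^T) 0 0.

Definition chr (a : Zgrp m) : {ffun Zgrp m -> C} := [ffun g => sgnF (dotF a g)].

Lemma chr_char a : is_character (chr a).
Proof.
split=> [g h|g]; rewrite !ffunE.
  by rewrite /dotF linearD mulmxDr add00 sgnF_add.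
by rewrite /sgnF; case: ifP => _; [left|right].
Qed.

Lemma chr_mul a a' : char_mul (chr a) (chr a') = chr (a + a').
Proof. by apply/ffunP=> g; rewrite !ffunE /dotF mulmxDl add00 sgnF_add. Qed.

Lemma chr0 : chr 0 = triv C m.
Proof. by apply/ffunP=> g; rewrite !ffunE /dotF mul0mx mxE /sgnF eqxx. Qed.

Definition ee (i : 'I_m) : Zgrp m := delta_mx 0 i.

Lemma dot_e_l i g : dotF (ee i) g = (g : 'rV['F_2]_m) 0 i.
Proof. by rewrite /dotF /ee -rowE !mxE. Qed.

Lemma dot_e_r a i : dotF a (ee i) = (a : 'rV['F_2]_m) 0 i.
Proof. by rewrite /dotF /ee trmx_delta -colE !mxE. Qed.

Lemma G_neq0 (a : Zgrp m) : a != 0 -> exists i, (a : 'rV['F_2]_m) 0 i != 0.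
Proof.
move=> /eqP ne.
case: (pickP (fun i => (a : 'rV['F_2]_m) 0 i != 0)) => [i hi|H]; first by exists i.
exfalso; apply: ne; apply/matrixP=> i j; rewrite (ord1 i) !mxE.
by have := H j => /negbFE/eqP.
Qed.

Lemma chr_nontriv a : a != 0 -> exists g, chr a g = -1.
Proof.
move=> /G_neq0 [i hi]; exists (ee i); rewrite ffunE dot_e_r /sgnF (negbTE hi) //.
Qed.

Lemma char_prod chi g : is_character chi ->
  chi g = \prod_i (if (g : 'rV['F_2]_m) 0 i == 0 then (1 : C) else chi (ee i)).
Proof.
move=> hc; have c0 := char0 hc; case: hc => hm _.
have eg : g = \sum_i ((g : 'rV['F_2]_m) 0 i *: (ee i : 'rV['F_2]_m)) :> 'rV['F_2]_m.
  by rewrite {1}(matrix_sum_delta g) big_ord1.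
rewrite {1}eg.
rewrite (big_morph chi hm c0); apply: eq_bigr => i _.
case: (F2_cases ((g : 'rV['F_2]_m) 0 i)) => ->; rewrite ?scale0r ?scale1r ?eqxx //.
Qed.

Definition arow (chi : {ffun Zgrp m -> C}) : Zgrp m :=
  \row_i (if chi (ee i) == 1 then 0 else 1).

Lemma char_repr chi : is_character chi -> chi = chr (arow chi).
Proof.
move=> hc; apply/ffunP=> g.
rewrite (char_prod g hc) (char_prod g (chr_char (arow chi))).
apply: eq_bigr => i _; case: ifP => // _.
rewrite ffunE dot_e_r mxE /sgnF.
case: hc => _ /(_ (ee i)) [] ->; rewrite ?eqxx //.
by rewrite (negbTE (neg1_neq1 C)).
Qed.
End Chr.


Section Part2.
Variable C : numClosedFieldType.
Variable m : nat.
Variable U : Zgrp m -> 'M[C]_(2 ^ m).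
Variable c : Zgrp m -> Zgrp m -> C.
Variable Uh : {ffun Zgrp m -> C} -> 'M[C]_(2 ^ m).
Hypothesis pU : proj_unitary_rep U c.
Hypothesis hUh : hat_unitary_rep Uh.
Hypothesis hd : dual_to U Uh.

Let uU : forall g, unitary (U g).
Proof. by case: pU. Qed.

Definition Pm : 'M[C]_(2 ^ m) := ((2 ^ m)%:R : C)^-1 *: \sum_(a : Zgrp m) Uh (chr C a).

Lemma Pm_inv chi : is_character chi -> Uh chi *m Pm = Pm.
Proof.
move=> hc; rewrite (char_repr hc) /Pm -scalemxAr mulmx_sumr; congr (_ *: _).
case: hUh => _ mul.
have e : forall a, Uh (chr C (arow chi)) *m Uh (chr C a) = Uh (chr C (arow chi + a)).
  by move=> a; rewrite -chr_mul mul //; apply: chr_char.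
under eq_bigr => a _ do rewrite e.
by rewrite [RHS](reindex_inj (addrI (arow chi : 'rV['F_2]_m))).
Qed.

Lemma tr_chr a : \tr (Uh (chr C a)) = if a == 0 then (2 ^ m)%:R else 0.
Proof.
case: eqP => [->|/eqP ne]; first by rewrite chr0 (Uh_triv hUh) mxtrace1.
have [g hg] := chr_nontriv C ne.
exact: (tr_nontriv uU hd (chr_char C a) hg).
Qed.

Lemma N_neq0 : ((2 ^ m)%:R : C) != 0.
Proof. by rewrite pnatr_eq0 expn_eq0. Qed.

Lemma tr_Pm : \tr Pm = 1.
Proof.
rewrite /Pm mxtraceZ raddf_sum /=.
under eq_bigr => a _ do rewrite tr_chr.
rewrite (bigD1 0) //= big1 ?addr0 ?eqxx ?mulVf ?N_neq0 //.
by move=> a /negbTE ->.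
Qed.

Lemma Pm_neq0 : Pm != 0.
Proof.
apply/eqP=> h; have := tr_Pm; rewrite h mxtrace0 => /eqP.
by rewrite eq_sym oner_eq0.
Qed.

Lemma exists_v : exists v : 'cV[C]_(2 ^ m),
  adjmx v *m v = 1%:M /\ forall chi, is_character chi -> Uh chi *m v = v.
Proof.
have [j hj] : exists j, col j Pm != 0.
  case: (pickP (fun j => col j Pm != 0)) => [j hj|H]; first by exists j.
  exfalso; move/eqP: Pm_neq0; apply; apply/matrixP => i k.
  by have := H k => /negbFE/eqP/matrixP/(_ i 0); rewrite !mxE.
set v0 := col j Pm.
have inv0 : forall chi, is_character chi -> Uh chi *m v0 = v0.
  by move=> chi hc; rewrite /v0 !colE mulmxA Pm_inv.
set s := (adjmx v0 *m v0) 0 0.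
have es : s = \sum_i `|v0 i 0| ^+ 2.
  by rewrite /s mxE; apply: eq_bigr => i _; rewrite adjmx_entry normCK mulrC.
have s_ge0 : 0 <= s by rewrite es sumr_ge0 // => i _; rewrite exprn_ge0.
have s_neq0 : s != 0.
  apply/eqP => s0; move/eqP: hj; apply; apply/matrixP => i k; rewrite (ord1 k).
  move: s0; rewrite es => /(psumr_eq0P (fun i _ => exprn_ge0 2 (normr_ge0 (v0 i 0)))) H.
  by have := H i isT => /eqP; rewrite sqrf_eq0 normr_eq0 => /eqP ->; rewrite mxE.
set r := sqrtC s.
have r_neq0 : r != 0 by rewrite sqrtC_eq0.
have r_conj : (r^-1)^* = r^-1 by rewrite geC0_conj // invr_ge0 sqrtC_ge0.
exists (r^-1 *: v0); split.
  rewrite adjmxZ -scalemxAl -scalemxAr scalerA [adjmx v0 *m v0]mx11_scalar -/s.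
  rewrite r_conj scale_scalar_mx -(sqrtCK s) -/r; congr scalar_mx.
  by rewrite expr2 mulrACA mulVf // mulr1.
by move=> chi hc; rewrite -scalemxAr inv0.
Qed.

Lemma part2 : exists b, covariant_onb U c b /\
  forall chi, is_character chi -> Uh chi = hat_from_basis b chi.
Proof.
have [v [nv iv]] := exists_v.
pose b g := U g *m v.
have eig : forall chi g, is_character chi -> Uh chi *m b g = chi g *: b g.
  move=> chi g hc; have e := hd g hc.
  have e2 : Uh chi *m U g = chi g *: (U g *m Uh chi) by rewrite e scalerA charsq // scale1r.
  by rewrite /b mulmxA e2 -scalemxAl -mulmxA iv.
have orth : forall g h, adjmx (b g) *m b h = (g == h)%:R%:M.
  move=> g h; case: (eqVneq g h) => [<-|ne].
    by rewrite /b adjmxM mulmxA -(mulmxA (adjmx v)) (proj2 (uU g)) mulmx1 nv.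
  have : g - h != 0 by rewrite subr_eq0.
  case/G_neq0 => i; rewrite !mxE subr_eq0 => hi.
  pose chi := chr C (ee i).
  have hc : is_character chi := chr_char C (ee i).
  have chg : chi g != chi h.
    by rewrite !ffunE !dot_e_l; apply: contra hi => /eqP/sgnF_inj ->.
  have e1 : adjmx (b g) *m (Uh chi *m b h) = chi h *: (adjmx (b g) *m b h).
    by rewrite eig // -scalemxAr.
  have e2 : adjmx (b g) *m (Uh chi *m b h) = chi g *: (adjmx (b g) *m b h).
    by rewrite mulmxA -(Uh_herm hUh hc) -adjmxM eig // adjmxZ charconj // scalemxAl.
  have : (chi g - chi h) *: (adjmx (b g) *m b h) = 0 by rewrite scalerBl -e1 -e2 subrr.
  move/eqP; rewrite scaler_eq0 subr_eq0 (negbTE chg) /= => /eqP ->.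
  by apply/matrixP=> ? ?; rewrite !mxE mul0rn.
have cov : forall g h, U g *m b h = c g h *: b (g + h).
  by move=> g h; rewrite /b mulmxA (proj1 (proj2 pU)) -scalemxAl.
exists b; split => // chi hc.
rewrite -[Uh chi]mulmx1 -(@complete _ _ _ orth) mulmx_sumr /hat_from_basis.
by apply: eq_bigr => g _; rewrite mulmxA eig // -scalemxAl.
Qed.
End Part2.


Theorem mainTheorem6 (C : numClosedFieldType) (m : nat)
    (U : Zgrp m -> 'M[C]_(2 ^ m)) (c : Zgrp m -> Zgrp m -> C) :
  proj_unitary_rep U c ->
  injective U ->
  (forall g, U g <> - 1%:M) ->
  (exists b, covariant_onb U c b) ->
  [/\ (forall b, covariant_onb U c b ->
         hat_unitary_rep (hat_from_basis b) /\ dual_to U (hat_from_basis b)),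
      (forall Uh, hat_unitary_rep Uh -> dual_to U Uh ->
         exists b, covariant_onb U c b /\
           forall chi, is_character chi -> Uh chi = hat_from_basis b chi) &
      (forall Uh, hat_unitary_rep Uh -> dual_to U Uh ->
         forall chi eta, is_character chi -> is_character eta ->
           Uh chi *m Uh chi = 1%:M /\
           \tr (Uh chi *m Uh eta) = (2 ^ m)%:R * (chi == eta)%:R)].
Proof.
move=> pU _ _ _; split.
- by move=> b hb; split; [exact: (part1a hb) | exact: (part1b hb)].
- by move=> Uh hUh hd; exact: (part2 pU hUh hd).
- move=> Uh hUh hd chi eta hc he; split; first exact: (Uh_sq hUh hc).
  have uU : forall g, unitary (U g) by case: pU.
  exact: (part3_tr uU hUh hd hc he).
Qed.
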